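(* Let $G$ be a finitely generated group with $\nabla G>0$, and let $A,B$ be finitely generated subgroups of infinite proindex in $G$. Then there exist finite index subgroups $A_0\le A$ and $B_0\le B$ such that $\langle A_0\cup B_0\rangle$ has infinite index in $G$.
   Context: For a group $U$, $d(U)$ denotes the minimal cardinality of a generating set of $U$. The rank gradient of a finitely generated group $G$ is $\nabla G=\inf_U \frac{d(U)-1}{[G:U]}$, where $U$ ranges over all finite index subgroups of $G$. The proindex of a subgroup $H$ in $G$ is the supremum of the indices $[G:U]$ over finite index subgroups $U$ of $G$ containing $H$. *)

(* Defs.v *)
From Stdlib Require Import Reals List Arith.
Open Scope R_scope.

Record Group := {
  carrier :> Type;
  gmul : carrier -> carrier -> carrier;
  gone : carrier;
  ginv : carrier -> carrier;
  gmul_assoc : forall x y z, gmul x (gmul y z) = gmul (gmul x y) z;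
  gmul_1l : forall x, gmul gone x = x;
  gmul_Vl : forall x, gmul (ginv x) x = gone
}.

Section GroupDefs.
Variable G : Group.

Definition subset (A B : G -> Prop) : Prop := forall x, A x -> B x.

Definition is_subgroup (H : G -> Prop) : Prop :=
  H (gone G) /\
  (forall x y, H x -> H y -> H (gmul G x y)) /\
  (forall x, H x -> H (ginv G x)).

Definition generated (S : G -> Prop) : G -> Prop :=
  fun x => forall H, is_subgroup H -> subset S H -> H x.

(* U is generated by (a set of at most) n elements, given as a list of length n *)
Definition generated_by_n (U : G -> Prop) (n : nat) : Prop :=
  exists l : list G, length l = n /\
    forall x, U x <-> generated (fun y => In y l) x.

Definition finitely_generated (U : G -> Prop) : Prop :=
  exists n, generated_by_n U n.

Definition is_rank (U : G -> Prop) (n : nat) : Prop :=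
  generated_by_n U n /\ forall m, generated_by_n U m -> (n <= m)%nat.

(* [A : U] = k, for U a subgroup contained in A: a list of k left-coset
   representatives in A, covering A, pairwise in distinct cosets. *)
Definition rel_index (A U : G -> Prop) (k : nat) : Prop :=
  exists l : list G, length l = k /\
    (forall g, In g l -> A g) /\
    (forall x, A x -> exists g, In g l /\ U (gmul G (ginv G g) x)) /\
    (forall i j, (i < k)%nat -> (j < k)%nat ->
        U (gmul G (ginv G (nth i l (gone G))) (nth j l (gone G))) -> i = j).

Definition full : G -> Prop := fun _ => True.

Definition index (U : G -> Prop) (k : nat) : Prop := rel_index full U k.

Definition finite_index (U : G -> Prop) : Prop := exists k, index U k.

(* nabla G > 0 : the infimum of (d(U)-1)/[G:U] over finite index subgroups U
   is positive, i.e. this set of reals has a positive lower bound. *)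
Definition rank_gradient_pos : Prop :=
  exists eps : R, 0 < eps /\
    forall (U : G -> Prop) (k d : nat),
      is_subgroup U -> index U k -> is_rank U d ->
      eps <= (INR d - 1) / INR k.

(* infinite proindex: the indices [G:U] of finite index subgroups U
   containing H are unbounded (supremum is infinite). *)
Definition infinite_proindex (H : G -> Prop) : Prop :=
  forall N : nat, exists (U : G -> Prop) (k : nat),
    is_subgroup U /\ subset H U /\ index U k /\ (N <= k)%nat.

End GroupDefs.

Arguments subset {G}.
Arguments is_subgroup {G}.
Arguments generated {G}.
Arguments finitely_generated {G}.
Arguments rel_index {G}.
Arguments index {G}.
Arguments finite_index {G}.
Arguments full {G}.
Arguments infinite_proindex {G}.

(* Main.v *)
Require Import Defs.
From Stdlib Require Import Reals List Arith.
From Stdlib Require Import Reals List Arith Lia Lra Classical ClassicalEpsilon.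

Open Scope nat_scope.
Section GA.
Variable G : Group.
Notation "x * y" := (gmul G x y).
Notation "x ^-1" := (ginv G x) (at level 2).
Notation one := (gone G).

Lemma mulA x y z : x * (y * z) = x * y * z. Proof. apply gmul_assoc. Qed.
Lemma mul1l x : one * x = x. Proof. apply gmul_1l. Qed.
Lemma mulVl x : x^-1 * x = one. Proof. apply gmul_Vl. Qed.
Lemma mulKl x y : x^-1 * (x * y) = y.
Proof. rewrite mulA, mulVl, mul1l; auto. Qed.
Lemma cancel_l x y z : x * y = x * z -> y = z.
Proof. intro H. rewrite <- (mulKl x y), <- (mulKl x z), H; auto. Qed.
Lemma mulVr x : x * x^-1 = one.
Proof. assert (h : (x * x^-1) * (x * x^-1) = x * x^-1).
  { rewrite <- mulA, (mulA (x^-1)), mulVl, mul1l; auto. }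
  rewrite <- (mulKl (x * x^-1) (x * x^-1)), h, mulVl; auto.
Qed.
Lemma mul1r x : x * one = x.
Proof. rewrite <- (mulVl x), mulA, mulVr, mul1l; auto. Qed.
Lemma mulKr x y : x * (x^-1 * y) = y.
Proof. rewrite mulA, mulVr, mul1l; auto. Qed.
Lemma invK x : (x^-1)^-1 = x.
Proof. apply (cancel_l (x^-1)). rewrite mulVr, mulVl; auto. Qed.
Lemma invM x y : (x * y)^-1 = y^-1 * x^-1.
Proof. apply (cancel_l (x*y)). rewrite mulVr, mulA, <- (mulA x y), mulVr, mul1r, mulVr; auto. Qed.
Lemma inv1 : one^-1 = one.
Proof. rewrite <- (mul1r (one^-1)), mulVl; auto. Qed.

Section Sub.
Variable H : G -> Prop.
Hypothesis Hs : is_subgroup H.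
Lemma s1 : H one. Proof. apply Hs. Qed.
Lemma sM x y : H x -> H y -> H (x * y). Proof. apply Hs. Qed.
Lemma sV x : H x -> H (x^-1). Proof. apply Hs. Qed.
Lemma sVV x : H (x^-1) -> H x. Proof. intro h. rewrite <- (invK x). apply sV; auto. Qed.
Lemma ssym x y : H (x^-1 * y) -> H (y^-1 * x).
Proof. intro h. apply sV in h. rewrite invM, invK in h. auto. Qed.
Lemma strans x y z : H (x^-1 * y) -> H (y^-1 * z) -> H (x^-1 * z).
Proof. intros h1 h2. pose proof (sM _ _ h1 h2) as h.
  rewrite <- mulA, mulKr in h. auto. Qed.
Lemma sdiv x y : H x -> H y -> H (x^-1 * y).
Proof. intros; apply sM; auto; apply sV; auto. Qed.
End Sub.

Lemma gen_sub (S : G -> Prop) : is_subgroup (generated S).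
Proof. split; [|split].
  - intros K HK _. apply HK.
  - intros x y hx hy K HK HS. apply HK; [apply hx|apply hy]; auto.
  - intros x hx K HK HS. apply HK; apply hx; auto.
Qed.
Lemma gen_incl (S : G -> Prop) x : S x -> generated S x.
Proof. intros h H HH HS; auto. Qed.
Lemma gen_min (S H : G -> Prop) : is_subgroup H -> subset S H -> subset (generated S) H.
Proof. intros h1 h2 x hx; apply hx; auto. Qed.

Lemma inter_sub (A B : G -> Prop) : is_subgroup A -> is_subgroup B ->
  is_subgroup (fun x => A x /\ B x).
Proof. intros ha hb; split; [|split].
  - split; apply s1; auto.
  - intros x y [] []; split; apply sM; auto.
  - intros x []; split; apply sV; auto.
Qed.


Fixpoint pd (H : G -> Prop) (l : list G) : Prop :=
  match l with nil => True | x :: l => (forall y, In y l -> ~ H (x^-1 * y)) /\ pd H l end.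

Lemma pd_app H l1 l2 : pd H (l1 ++ l2) <-> pd H l1 /\ pd H l2 /\
  (forall x y, In x l1 -> In y l2 -> ~ H (x^-1 * y)).
Proof. induction l1 as [|a l1 IH]; simpl.
  - intuition.
  - rewrite IH. split.
    + intros [h1 [h2 [h3 h4]]]. repeat split; auto.
      * intros; apply h1; apply in_or_app; auto.
      * intros x y [<-|hx] hy; auto. apply h1; apply in_or_app; auto.
    + intros [[h1 h2] [h3 h4]]. repeat split; auto.
      * intros y hy. apply in_app_or in hy as [hy|hy]; auto; apply h4; simpl; auto.
Qed.

Lemma pd_eq H (Hs : is_subgroup H) l x y : pd H l -> In x l -> In y l -> H (x^-1 * y) -> x = y.
Proof. induction l as [|a l IH]; simpl; [tauto|].
  intros [h1 h2] [<-|hx] [<-|hy] hxy; auto.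
  - exfalso; eapply h1; eauto.
  - exfalso; eapply h1; eauto. apply ssym; auto.
Qed.

Lemma pd_nth H (Hs : is_subgroup H) l : pd H l ->
  forall i j, i < length l -> j < length l ->
   H ((nth i l one)^-1 * nth j l one) -> i = j.
Proof. induction l as [|a l IH]; simpl; intros hp i j hi hj h; [lia|].
  destruct hp as [h1 h2]. destruct i, j; auto.
  - exfalso; apply (h1 (nth j l one)); [apply nth_In; lia| eauto].
  - exfalso; apply (h1 (nth i l one)); [apply nth_In; lia|]. apply ssym; eauto.
  - f_equal; apply IH; auto; lia.
Qed.

Lemma nth_pd H l : (forall i j, i < length l -> j < length l ->
   H ((nth i l one)^-1 * nth j l one) -> i = j) -> pd H l.
Proof. induction l as [|a l IH]; simpl; intros h; auto. split.
  - intros y hy hh. destruct (In_nth l y one hy) as [j [hj <-]].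
    specialize (h 0 (S j)); simpl in h. assert (0 = S j) by (apply h; auto; lia). lia.
  - apply IH. intros i j hi hj hh. assert (S i = S j) by (apply h; simpl; auto; lia). lia.
Qed.

Lemma pd_incl_app H l1 x l2 : pd H (l1 ++ x :: l2) -> pd H (l1 ++ l2).
Proof. rewrite !pd_app. simpl. intros [h1 [[h2 h3] h4]]. repeat split; auto;
  intros; apply h4; simpl; auto. Qed.

Lemma pigeon (N V : G -> Prop) (HN : is_subgroup N) (HV : is_subgroup V)
  (sub : subset V N) : forall gs xs, pd N xs ->
  (forall x, In x xs -> exists g, In g gs /\ V (g^-1 * x)) -> length xs <= length gs.
Proof. induction gs as [|g gs IH]; intros xs hp hc.
  - destruct xs as [|x xs]; simpl; [lia|]. destruct (hc x) as [g [[] _]]; simpl; auto.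
  - destruct (classic (exists x, In x xs /\ V (g^-1 * x))) as [[x [hx hv]]|hn].
    + destruct (in_split x xs hx) as [l1 [l2 ->]].
      assert (length (l1 ++ l2) <= length gs).
      { apply IH. eapply pd_incl_app; eauto.
        intros y hy. destruct (hc y) as [g' [[<-|hg'] hv']].
        - apply in_app_or in hy; apply in_or_app; simpl; tauto.
        - exfalso. assert (hxy : V (x^-1 * y)) by (apply (strans _ HV _ g); auto; apply ssym; auto).
          apply sub in hxy. apply pd_app in hp as [_ [[h2 _] h4]].
          apply in_app_or in hy as [hy|hy].
          + apply (h4 y x hy (or_introl eq_refl)). apply ssym; auto.
          + apply (h2 y hy hxy).
        - eauto. }
      rewrite length_app in *; simpl; lia.
    + simpl. apply le_S. apply IH; auto. intros y hy. destruct (hc y hy) as [g' [[<-|hg'] hv']].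
      * exfalso; eauto.
      * eauto.
Qed.


Lemma build_reps (U A : G -> Prop) (HU : is_subgroup U) (HA : is_subgroup A) :
  forall ts, pd U ts -> exists as_, (forall a, In a as_ -> A a) /\
   pd (fun x => A x /\ U x) as_ /\
   (forall x, A x -> (exists t, In t ts /\ U (t^-1 * x)) ->
      exists a, In a as_ /\ (A (a^-1 * x) /\ U (a^-1 * x))) /\
   (forall a, In a as_ -> exists t, In t ts /\ U (t^-1 * a)).
Proof. induction ts as [|t ts IH]; simpl; intros hp.
  - exists nil; simpl; repeat split; try tauto. intros x _ [t [[] _]].
  - destruct hp as [hp1 hp2]. destruct (IH hp2) as [as_ [h1 [h2 [h3 h4]]]].
    destruct (classic (exists a, A a /\ U (t^-1 * a))) as [[a [ha hu]]|hn].
    + exists (a :: as_). simpl. repeat split.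
      * intros b [<-|hb]; auto.
      * intros b hb [_ hab]. destruct (h4 b hb) as [t' [ht' hu']].
        apply (hp1 t' ht'). apply (strans _ HU _ a); auto. apply (strans _ HU _ b); auto.
        apply ssym; auto.
      * auto.
      * intros x hx [t' [[<-|ht'] hu']].
        -- exists a; split; auto. split. apply sdiv; auto. apply (strans _ HU _ t); auto. apply ssym; auto.
        -- destruct (h3 x hx) as [b [hb hb']]; eauto.
      * intros b [<-|hb]. { exists t; simpl; auto. }
        destruct (h4 b hb) as [t' [ht1 ht2]]. exists t'; simpl; auto.
    + exists as_. repeat split; auto.
      * intros x hx [t' [[<-|ht'] hu']]. { exfalso; eauto. } eauto.
      * intros b hb. destruct (h4 b hb) as [t' [ht1 ht2]]. exists t'; simpl; auto.
Qed.


Lemma conj_eq t a t' a' : (t * a)^-1 * (t' * a') = a^-1 * (t^-1 * t') * a'.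
Proof. rewrite invM. rewrite !mulA. auto. Qed.

Lemma pd_map (N A0 : G -> Prop) t as_ : pd A0 as_ ->
  (forall a b, In a as_ -> In b as_ -> N (a^-1*b) -> A0 (a^-1*b)) ->
  pd N (map (fun a => t * a) as_).
Proof. induction as_ as [|a as_ IH]; simpl; auto. intros [h1 h2] h. split.
  - intros y hy hn. apply in_map_iff in hy as [b [<- hb]].
    rewrite conj_eq, mulVl, mul1r in hn. apply (h1 b hb). apply h; auto.
  - apply IH; auto.
Qed.

Lemma prod_pd (UA A0 N : G -> Prop) (HUA : is_subgroup UA)
  (NUA : subset N UA) ts as_ : pd UA ts -> pd A0 as_ -> (forall a, In a as_ -> UA a) ->
  (forall a b, In a as_ -> In b as_ -> N (a^-1*b) -> A0 (a^-1*b)) ->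
  pd N (flat_map (fun t => map (fun a => t*a) as_) ts).
Proof. intros hts has hua hn. induction ts as [|t ts IH]; simpl; auto.
  destruct hts as [h1 h2]. apply pd_app. repeat split.
  - apply (pd_map N A0); auto.
  - apply IH; auto.
  - intros x y hx hy hnn. apply in_map_iff in hx as [a [<- ha]].
    apply in_flat_map in hy as [t' [ht' hy]]. apply in_map_iff in hy as [a' [<- ha']].
    apply NUA in hnn. rewrite conj_eq in hnn. apply (h1 t' ht').
    assert (e : t^-1 * t' = a * (a^-1 * (t^-1 * t') * a') * a'^-1).
    { rewrite <- !mulA, mulVr, mul1r, mulKr. auto. }
    rewrite e. apply sM; auto. apply sM; auto. apply sV; auto.
Qed.


Lemma alg1 a b x y c : a^-1 * (x*y*c) = (a^-1*(x*b)) * (b^-1*(y*c)).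
Proof. rewrite !mulA. rewrite <- (mulA (a^-1*x) b (b^-1)), mulVr, mul1r. auto. Qed.
Lemma alg2 c x d : (c^-1 * (x*d))^-1 = d^-1 * (x^-1 * c).
Proof. rewrite !invM, invK. rewrite !mulA. auto. Qed.

Lemma schreier (A A0 : G -> Prop) (HA : is_subgroup A) (HA0 : is_subgroup A0)
  (sub : subset A0 A) (S : list G) (hS : forall x, A x <-> generated (fun y => In y S) x)
  (as_ : list G) (has : forall a, In a as_ -> A a) (hpd : pd A0 as_)
  (hcov : forall x, A x -> exists a, In a as_ /\ A0 (a^-1 * x)) :
  exists L, length L = 1 + length as_ * length S /\
     forall x, A0 x <-> generated (fun y => In y L) x.
Proof.
  set (rho := fun x => epsilon (inhabits one) (fun a => In a as_ /\ A0 (a^-1 * x))).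
  assert (rho_spec : forall x, A x -> In (rho x) as_ /\ A0 ((rho x)^-1 * x)).
  { intros x hx. apply (epsilon_spec (inhabits one) (fun a => In a as_ /\ A0 (a^-1 * x))).
    apply hcov; auto. }
  assert (rho_eq : forall x c, A x -> In c as_ -> A0 (c^-1 * x) -> rho x = c).
  { intros x c hx hc h. destruct (rho_spec x hx) as [h1 h2].
    apply (pd_eq A0 HA0 as_); auto. apply (strans _ HA0 _ x); auto. apply ssym; auto. }
  assert (SA : forall s, In s S -> A s).
  { intros s hs; apply hS; apply gen_incl; auto. }
  set (Sch := flat_map (fun c => map (fun s => (rho (s*c))^-1 * (s*c)) S) as_).
  set (W := generated (fun y => In y Sch)).
  assert (SchA0 : forall y, In y Sch -> A0 y).
  { intros y hy. apply in_flat_map in hy as [c [hc hy]]. apply in_map_iff in hy as [s [<- hs]].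
    apply rho_spec. apply sM; auto. }
  assert (WA0 : subset W A0) by (apply gen_min; auto).
  assert (HW : is_subgroup W) by apply gen_sub.
  set (X := fun x => A x /\ forall c, In c as_ -> W ((rho (x*c))^-1 * (x*c))).
  assert (HX : is_subgroup X).
  { split; [|split].
    - split; [apply s1; auto|]. intros c hc. rewrite mul1l.
      rewrite (rho_eq c c); auto. rewrite mulVl; apply s1; auto. rewrite mulVl; apply s1; auto.
    - intros x y [hx hxw] [hy hyw]. split; [apply sM; auto|]. intros c hc.
      assert (hyc : A (y*c)) by (apply sM; auto).
      destruct (rho_spec _ hyc) as [hc' _].
      set (c' := rho (y*c)) in *.
      assert (hxc : A (x*c')) by (apply sM; auto).
      destruct (rho_spec _ hxc) as [hc'' _].
      set (c'' := rho (x*c')) in *.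
      assert (hw : W (c''^-1 * (x*y*c))).
      { rewrite (alg1 c'' c'). apply (sM _ HW); [apply hxw|apply hyw]; auto. }
      rewrite (rho_eq (x*y*c) c''); auto. apply sM; auto. apply sM; auto.
    - intros x [hx hxw]. split; [apply sV; auto|]. intros c hc.
      assert (hxc : A (x^-1*c)) by (apply sM; auto; apply sV; auto).
      destruct (rho_spec _ hxc) as [hd hd'].
      set (d := rho (x^-1*c)) in *.
      assert (e : rho (x * d) = c).
      { apply rho_eq; auto. apply sM; auto. apply (sV _ HA0) in hd'. rewrite alg2, invK in hd'. auto. }
      specialize (hxw d hd). rewrite e in hxw. apply (sV _ HW) in hxw. rewrite alg2 in hxw. auto. }
  assert (AX : subset A X).
  { intros x hx. apply hS in hx. apply (gen_min (fun y => In y S) X HX); auto.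
    intros s hs. split; auto. intros c hc. apply gen_incl. apply in_flat_map. exists c; split; auto.
    apply in_map_iff. exists s; auto. }
  destruct (rho_spec one (s1 _ HA)) as [he he'].
  set (e := rho one) in *. rewrite mul1r in he'. apply sVV in he'; auto.
  exists (e :: Sch). split.
  { simpl. f_equal. unfold Sch. rewrite (flat_map_constant_length (c := length S)); auto.
    intros; apply length_map. }
  intros x. split.
  - intros hx. destruct (AX x (sub x hx)) as [_ hw]. specialize (hw e he).
    rewrite (rho_eq (x*e) e) in hw; auto.
    2: apply sM; auto. 2: apply sdiv; auto; apply sM; auto.
    assert (ex : x = e * (e^-1 * (x * e)) * e^-1).
    { rewrite mulKr, <- mulA, mulVr, mul1r. auto. }
    assert (HGL : is_subgroup (generated (fun y => In y (e :: Sch)))) by apply gen_sub.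
    rewrite ex. apply (sM _ HGL). apply (sM _ HGL). apply gen_incl; simpl; auto.
    apply (gen_min (fun y => In y Sch)); auto. intros y hy; apply gen_incl; simpl; auto.
    apply (sV _ HGL). apply gen_incl; simpl; auto.
  - apply gen_min; auto. intros y [<-|hy]; auto.
Qed.


Lemma gen_union (A0 B0 : G -> Prop) LA LB :
  (forall x, A0 x <-> generated (fun y => In y LA) x) ->
  (forall x, B0 x <-> generated (fun y => In y LB) x) ->
  forall x, generated (fun y => A0 y \/ B0 y) x <-> generated (fun y => In y (LA ++ LB)) x.
Proof. intros hA hB x. split; apply gen_min; try apply gen_sub.
  - intros y [hy|hy].
    + apply hA in hy. apply (gen_min (fun y => In y LA)); auto. apply gen_sub.
      intros z hz; apply gen_incl; apply in_or_app; auto.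
    + apply hB in hy. apply (gen_min (fun y => In y LB)); auto. apply gen_sub.
      intros z hz; apply gen_incl; apply in_or_app; auto.
  - intros y hy. apply in_app_or in hy as [hy|hy]; apply gen_incl.
    + left; apply hA; apply gen_incl; auto.
    + right; apply hB; apply gen_incl; auto.
Qed.

End GA.

Lemma min_nat (P : nat -> Prop) n : P n -> exists d, P d /\ forall m, P m -> d <= m.
Proof. induction n as [n IH] using lt_wf_ind. intros h.
  destruct (classic (exists m, m < n /\ P m)) as [[m [hm pm]]|hn].
  - apply (IH m hm pm).
  - exists n; split; auto. intros m pm. destruct (le_lt_dec n m); auto. exfalso; eauto.
Qed.

Theorem lemma3p1 (G : Group) (A B : G -> Prop) :
  finitely_generated (@full G) ->
  rank_gradient_pos G ->
  is_subgroup A -> finitely_generated A -> infinite_proindex A ->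
  is_subgroup B -> finitely_generated B -> infinite_proindex B ->
  exists A0 B0 : G -> Prop,
    is_subgroup A0 /\ subset A0 A /\ (exists k, rel_index A A0 k) /\
    is_subgroup B0 /\ subset B0 B /\ (exists k, rel_index B B0 k) /\
    ~ finite_index (generated (fun x => A0 x \/ B0 x)).
Proof.
  intros _ [eps [heps hrg]] HA [dA [SA [hSA hA]]] hpA HB [dB [SB [hSB hB]]] hpB.
  destruct (INR_unbounded (INR (dA + dB + 2) / eps)) as [K hK].
  assert (hKe : (INR K * eps > INR (dA + dB + 2))%R).
  { apply Rmult_gt_compat_r with (r := eps) in hK; auto.
    unfold Rdiv in hK. rewrite Rmult_assoc, Rinv_l, Rmult_1_r in hK; lra. }
  destruct (hpA K) as [UA [kA [HUA [AUA [hiA hkA]]]]].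
  destruct (hpB K) as [UB [kB [HUB [BUB [hiB hkB]]]]].
  destruct hiA as [tsA [lenA [_ [covA distA]]]].
  destruct hiB as [tsB [lenB [_ [covB distB]]]].
  rewrite <- lenA in distA. rewrite <- lenB in distB.
  apply nth_pd in distA. apply nth_pd in distB.
  destruct (build_reps G UB A HUB HA tsB distB) as [asA [aA [pdA [cvA _]]]].
  destruct (build_reps G UA B HUA HB tsA distA) as [asB [aB [pdB [cvB _]]]].
  set (A0 := fun x => A x /\ UB x) in *.
  set (B0 := fun x => B x /\ UA x) in *.
  assert (HA0 : is_subgroup A0) by (apply inter_sub; auto).
  assert (HB0 : is_subgroup B0) by (apply inter_sub; auto).
  assert (cvA' : forall x, A x -> exists a, In a asA /\ A0 (gmul G (ginv G a) x)).
  { intros x hx; apply cvA; auto. apply covB; exact I. }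
  assert (cvB' : forall x, B x -> exists a, In a asB /\ B0 (gmul G (ginv G a) x)).
  { intros x hx; apply cvB; auto. apply covA; exact I. }
  destruct (schreier G A A0 HA HA0 (fun x h => proj1 h) SA hA asA aA pdA cvA')
    as [LA [hLA eLA]].
  destruct (schreier G B B0 HB HB0 (fun x h => proj1 h) SB hB asB aB pdB cvB')
    as [LB [hLB eLB]].
  exists A0, B0. split; [auto|split; [|split; [|split; [auto|split; [|split]]]]].
  - intros x h; apply h.
  - exists (length asA). exists asA. split; [auto|split; [auto|split; [auto|]]].
    intros; apply (pd_nth G A0 HA0 asA); auto.
  - intros x h; apply h.
  - exists (length asB). exists asB. split; [auto|split; [auto|split; [auto|]]].
    intros; apply (pd_nth G B0 HB0 asB); auto.
  - intros [m [gs [lenm [hgs [covm distm]]]]].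
    set (V := generated (fun x => A0 x \/ B0 x)) in *.
    assert (HV : is_subgroup V) by apply gen_sub.
    assert (eV := gen_union G A0 B0 LA LB eLA eLB).
    destruct (min_nat (generated_by_n G V) (length (LA ++ LB))) as [d [hd1 hd2]].
    { exists (LA ++ LB); split; auto. }
    assert (hdle : d <= length (LA ++ LB)).
    { apply hd2. exists (LA ++ LB); split; auto. }
    rewrite length_app in hdle.
    assert (hr := hrg V m d HV (ex_intro _ gs (conj lenm (conj hgs (conj covm distm)))) (conj hd1 hd2)).
    set (N := fun x => UA x /\ UB x).
    set (N' := fun x => UB x /\ UA x).
    assert (HN : is_subgroup N) by (apply inter_sub; auto).
    assert (HN' : is_subgroup N') by (apply inter_sub; auto).
    assert (VN : subset V N).
    { apply gen_min; auto. intros x [[h1 h2]|[h1 h2]]; split; auto. }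
    assert (VN' : subset V N').
    { apply gen_min; auto. intros x [[h1 h2]|[h1 h2]]; split; auto. }
    assert (pA := prod_pd G UA A0 N HUA (fun x h => proj1 h) tsA asA distA pdA
       (fun a h => AUA a (aA a h))
       (fun a b ha hb hn => conj (sdiv G A HA _ _ (aA a ha) (aA b hb)) (proj2 hn))).
    assert (pB := prod_pd G UB B0 N' HUB (fun x h => proj1 h) tsB asB distB pdB
       (fun a h => BUB a (aB a h))
       (fun a b ha hb hn => conj (sdiv G B HB _ _ (aB a ha) (aB b hb)) (proj2 hn))).
    apply (pigeon G N V HN HV VN gs) in pA; [|intros x _; apply covm; exact I].
    apply (pigeon G N' V HN' HV VN' gs) in pB; [|intros x _; apply covm; exact I].
    rewrite (flat_map_constant_length (c := length asA)) in pA
      by (intros; apply length_map).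
    rewrite (flat_map_constant_length (c := length asB)) in pB
      by (intros; apply length_map).
    assert (rA1 : 0 < length asA).
    { destruct (cvA' (gone G) (s1 G A HA)) as [a [ha _]]. destruct asA; [contradiction|simpl; lia]. }
    assert (rB1 : 0 < length asB).
    { destruct (cvB' (gone G) (s1 G B HB)) as [a [ha _]]. destruct asB; [contradiction|simpl; lia]. }
    assert (hnat : K * d <= m * (dA + dB + 2)).
    { rewrite hLA, hLB, hSA, hSB in hdle. rewrite lenA in pA. rewrite lenB in pB.
      rewrite lenm in pA, pB. nia. }
    assert (hK1 : 0 < K).
    { destruct K; [|lia]. exfalso. simpl in hKe. pose proof (pos_INR (dA+dB+2)). lra. }
    assert (hm : 0 < m).
    { rewrite lenA, lenm in pA. nia. }
    apply le_INR in hnat. rewrite !mult_INR in hnat.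
    assert (hm' : (0 < INR m)%R) by (apply lt_0_INR; auto).
    apply Rmult_le_compat_r with (r := INR m) in hr; [|lra].
    unfold Rdiv in hr. rewrite Rmult_assoc, Rinv_l, Rmult_1_r in hr; [|lra].
    assert (hK' : (0 < INR K)%R) by (apply lt_0_INR; auto).
    set (C := INR (dA + dB + 2)) in *.
    assert (h1 : (eps * INR m * INR K <= (INR d - 1) * INR K)%R)
      by (apply Rmult_le_compat_r; lra).
    assert (h2 : (INR m * C < INR m * (INR K * eps))%R)
      by (apply Rmult_lt_compat_l; lra).
    nra.
Qed.
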